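(* The map ${}'\epsilon$ restricts to a bijection ${}'\mathcal X^{0,+}_{N-2}\to{}'E^{0,+}_N$ and to a bijection ${}''\mathcal X^{0,+}_{N-2}\to{}''E^{0,+}_N$.
   Context: Let $N\ge 3$ be an odd integer and $F=\mathbb Z/2\mathbb Z$. For integers $i,j$ let $[i,j]=\{h\in\mathbb Z: i\le h\le j\}$ (empty if $i>j$). Let $S_N=[1,N]$. The set of all subsets of $S_N$ is an $F$-vector space with sum $X+X'=(X\cup X')-(X\cap X')$; let $E_N$ be the subspace of subsets of even cardinality. A $2$-element subset $\{i,j\}\subseteq S_N$ is written $ij$ when either ($i<j$ and $j-i$ odd) or ($i>j$ and $i-j$ even); each $2$-element subset has exactly one such writing. Let $\mathcal P_N$ be the set of all finite sets $B$ of pairwise disjoint $2$-element subsets of $S_N$; for $B\in\mathcal P_N$ let $\mathrm{supp}(B)=\bigcup_{X\in B}X$, $B^0=\{\{i,j\}\in B: i-j\text{ even}\}$, $B^1=\{\{i,j\}\in B: i-j\text{ odd}\}$. A set $X\subseteq S_N$ is $0$-covered (resp. $1$-covered) by $B^1$ if there are $a_1b_1,\dots,a_sb_s\in B^1$ ($s\ge 0$, so $a_r<b_r$) with $X=[a_1,b_1]\sqcup\dots\sqcup[a_s,b_s]$ (resp. $X=[a_1,b_1]\sqcup\dots\sqcup[a_s,b_s]\sqcup\{u\}$ for some $u$), disjoint unions. Let ${}^*\mathcal P_N$ be the set of $B\in\mathcal P_N$ such that: for every $ij\in B^1$ the set $[i+1,j-1]$ is $0$-covered by $B^1$; and there is a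 sequence $i_*(B)=(i_1,\dots,i_{2s})$ in $S_N$ with $B^0=\{i_{2s}i_1,i_{2s-1}i_2,\dots,i_{s+1}i_s\}$ (so $s=|B^0|$; the sequence is unique) such that, if $s\ge1$, each of $[i_1+1,i_2-1],\dots,[i_{s-1}+1,i_s-1],[i_{s+1}+1,i_{s+2}-1],\dots,[i_{2s-1}+1,i_{2s}-1]$ is $0$-covered by $B^1$. For $B\in{}^*\mathcal P_N$ with $i_*(B)=(i_1,\dots,i_{2s})$ consider: (I) $s=0$, or $s\ge1$ and $[1,i_1-1]$ and $[i_{2s}+1,N]$ are $0$-covered by $B^1$; (II) $N\notin\mathrm{supp}(B)$ and either $s=0$, or $s$ is odd and either (i) $[1,i_1-1]$ is $1$-covered and $[i_{2s}+1,N-1]$ is $0$-covered by $B^1$, or (ii) $[1,i_1-1]$ is $0$-covered and $[i_{2s}+1,N-1]$ is $1$-covered by $B^1$; (III) (I) holds and, if $s$ is even then $\{i,N\}\in B$ for some even $i$, if $s$ is odd then $\{i,N\}\in B$ for some odd $i$. Let $\mathcal X^+_{N-2}$, $\mathcal X^-_{N-2}$ be the sets of $B\in{}^*\mathcal P_N$ satisfying (II), (III) respectively, and $\mathcal X_{N-2}=\mathcal X^+_{N-2}\sqcup\mathcal X^-_{N-2}$. For $B\in\mathcal X^+_{N-2}$ with $s\ge1$ there is a unique $u_B$: in case (i), $u_B\in[1,i_1-1]$ with $[1,u_B-1]$, $[u_B+1,i_1-1]$ $0$-covered by $B^1$ ($u_B$ odd); in case (ii), $u_B\in[i_{2s}+1,N-1]$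 with $[i_{2s}+1,u_B-1]$, $[u_B+1,N-1]$ $0$-covered by $B^1$ ($u_B$ even). Put $[[ij]]=[i,j]$ if $i<j$ and $[[ij]]=[i,N]\cup[1,j]$ if $i>j$. For $B\in\mathcal X_{N-2}$ define ${}'\epsilon(B)\in E_N$: ${}'\epsilon(B)=\sum_{ij\in B}[[ij]]$ if $B\in\mathcal X^-_{N-2}$ or if $B\in\mathcal X^+_{N-2}$ with $|B^0|=0$; ${}'\epsilon(B)=\sum_{ij\in B}[[ij]]+[u_B,N]$ if $B\in\mathcal X^+_{N-2}$, $|B^0|$ odd, $u_B$ even; ${}'\epsilon(B)=\sum_{ij\in B}[[ij]]+\{N\}+[1,u_B]$ if $B\in\mathcal X^+_{N-2}$, $|B^0|$ odd, $u_B$ odd. Let $\mathcal X^{0,+}_{N-2}=\{B\in\mathcal X^+_{N-2}:|B^0|=0\}$, ${}'\mathcal X^{0,+}_{N-2}=\{B\in\mathcal X^{0,+}_{N-2}: N-1\notin\mathrm{supp}(B)\}$, ${}''\mathcal X^{0,+}_{N-2}=\{B\in\mathcal X^{0,+}_{N-2}: N-1\in\mathrm{supp}(B)\}$. For $X\in E_N$ let $\gamma(X)=|\{x\in X: x\text{ even}\}|-|\{x\in X:x\text{ odd}\}|$; let $E^{0,+}_N=\{X\in E_N: N\notin X,\ \gamma(X)=0\}$, ${}'E^{0,+}_N=\{X\in E^{0,+}_N:N-1\notin X\}$, ${}''E^{0,+}_N=\{X\in E^{0,+}_N:N-1\in X\}$. *)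

(* Defs.v *)
From mathcomp Require Import all_boot all_order all_algebra.
Set Implicit Arguments. Unset Strict Implicit. Unset Printing Implicit Defensive.

(* Points of S_N = [1,N] are represented in 'I_N.+1 ; the point 0 is never
   used (every subset considered is required to avoid 0).                   *)
Notation pt N := ('I_N.+1).

Section Defs.
Variable N : nat.
Implicit Types (X Y : {set pt N}) (B : {set {set pt N}}).

Definition iv (a b : nat) : {set pt N} := [set x : pt N | (a <= x <= b)%N].

Definition inS X : bool := (@ord0 N) \notin X.

Definition symd X Y : {set pt N} := (X :|: Y) :\: (X :&: Y).

(* the 2-element set X is written "ij" *)
Definition writing X (i j : pt N) : bool :=
  (X == [set i; j]) &&
  (((i < j)%N && odd (j - i)) || ((j < i)%N && ~~ odd (i - j))).

Definition PN B : Prop :=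
  (forall X, X \in B -> #|X| = 2 /\ inS X) /\
  (forall X Y, X \in B -> Y \in B -> X != Y -> [disjoint X & Y]).

Definition supp B : {set pt N} := \bigcup_(X in B) X.

Definition B0 B : {set {set pt N}} :=
  [set X in B | [exists i : pt N, exists j : pt N,
     [&& X == [set i; j], i != j & ~~ odd (maxn i j - minn i j)]]].
Definition B1 B : {set {set pt N}} :=
  [set X in B | [exists i : pt N, exists j : pt N,
     [&& X == [set i; j], i != j & odd (maxn i j - minn i j)]]].

Definition zero_cov B X : Prop :=
  exists s : seq (pt N * pt N),
    (forall p, p \in s -> (p.1 < p.2)%N /\ [set p.1; p.2] \in B1 B) /\
    pairwise (fun p q : pt N * pt N => [disjoint iv p.1 p.2 & iv q.1 q.2]) s /\
    X = \bigcup_(p <- s) iv p.1 p.2.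

Definition one_cov B X : Prop :=
  exists (u : pt N) (Y : {set pt N}),
    zero_cov B Y /\ u \notin Y /\ X = u |: Y.

(* the sequence i_*(B) = (i_1,...,i_{2s}) = l (0-based: i_(k+1) = nth l k) *)
Definition istar_seq B (l : seq (pt N)) : Prop :=
  let s := #|B0 B| in
  let i k := nth (@ord0 N) l k in
  size l = (2 * s)%N /\
  (forall k, (k < 2 * s)%N -> (0 < i k)%N) /\
  (forall X, X \in B0 B <->
     exists k, (k < s)%N /\ X = [set i (2 * s - 1 - k)%N; i k]) /\
  (forall k, (k < s)%N -> writing [set i (2 * s - 1 - k)%N; i k] (i (2 * s - 1 - k)%N) (i k)) /\
  (forall k, (k.+1 < s)%N -> zero_cov B (iv (i k).+1 (i k.+1).-1)) /\
  (forall k, (s <= k)%N -> (k.+1 < 2 * s)%N -> zero_cov B (iv (i k).+1 (i k.+1).-1)).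

Definition starP B : Prop :=
  PN B /\
  (forall X (i j : pt N), X \in B1 B -> writing X i j ->
      zero_cov B (iv i.+1 j.-1)) /\
  exists l, istar_seq B l.

Definition condII B : Prop :=
  (@ord_max N) \notin supp B /\
  (#|B0 B| = 0%N \/
   (odd #|B0 B| /\
    exists l, istar_seq B l /\
      let s := #|B0 B| in
      let i1 := nth (@ord0 N) l 0 in
      let i2s := nth (@ord0 N) l (2 * s - 1) in
      ((one_cov B (iv 1 i1.-1) /\ zero_cov B (iv i2s.+1 N.-1)) \/
       (zero_cov B (iv 1 i1.-1) /\ one_cov B (iv i2s.+1 N.-1))))).

Definition Xplus B : Prop := starP B /\ condII B.
Definition X0plus B : Prop := Xplus B /\ #|B0 B| = 0%N.
Definition X0plus' B : Prop := X0plus B /\ (@inord N N.-1) \notin supp B.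
Definition X0plus'' B : Prop := X0plus B /\ (@inord N N.-1) \in supp B.

Definition wiv X : {set pt N} :=
  [set x : pt N | [exists i : pt N, exists j : pt N, writing X i j &&
     (((i < j)%N && (i <= x <= j)%N) ||
      ((j < i)%N && ((i <= x <= N)%N || (1 <= x <= j)%N)))]].

(* 'epsilon on X^{0,+}_{N-2} (where |B^0| = 0): sum_{ij in B} [[ij]] *)
Definition eps B : {set pt N} := \big[symd/set0]_(X in B) wiv X.

Definition EN X : Prop := inS X /\ ~~ odd #|X|.
Definition gamma X : int :=
  (#|[set x in X | ~~ odd x]|%:Z - #|[set x in X | odd x]|%:Z)%R.
Definition E0plus X : Prop := EN X /\ (@ord_max N) \notin X /\ gamma X = 0%R.
Definition E0plus' X : Prop := E0plus X /\ (@inord N N.-1) \notin X.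
Definition E0plus'' X : Prop := E0plus X /\ (@inord N N.-1) \in X.

End Defs.

Definition bij_betw (A C : Type) (P : A -> Prop) (Q : C -> Prop) (f : A -> C) : Prop :=
  (forall a, P a -> Q (f a)) /\
  (forall a a', P a -> P a' -> f a = f a' -> a = a') /\
  (forall c, Q c -> exists a, P a /\ f a = c).

(* Main.v *)
Require Import Defs.
From mathcomp Require Import all_boot all_order all_algebra.
From mathcomp Require Import zify.
Set Implicit Arguments. Unset Strict Implicit. Unset Printing Implicit Defensive.

Definition levstep (L : nat) (b : bool) : nat :=
  if L == 0 then (b : nat) else if odd L then (if b then L.-1 else L.+1) else (if b then L.+1 else L.-1).

Fixpoint lev (m : nat -> bool) (x : nat) : nat :=
  match x with 0 => 0 | y.+1 => levstep (lev m y) (m y.+1) end.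

Definition stepok (a b : nat) : bool := (b == a.+1) || (a == b.+1) || ((a == 0) && (b == 0)).

Lemma lev_step m y : stepok (lev m y) (lev m y.+1).
Proof.
rewrite /= /levstep /stepok; case: (lev m y) => [|L] /=; first by case: (m _).
by case: (odd L); case: (m _) => /=; lia.
Qed.

Definition Phi (l : nat -> nat) (i j : nat) : bool :=
 [&& 0 < i, i < j, l i == (l i.-1).+1, l j == l i.-1 & all (fun y => l i.-1 < l y) (iota i (j - i))].

Lemma PhiP l i j : Phi l i j ->
  [/\ 0 < i, i < j, l i = (l i.-1).+1, l j = l i.-1 & forall y, i <= y < j -> l i.-1 < l y].
Proof.
case/and5P=> h1 h2 /eqP h3 /eqP h4 /allP h5; split=> // y hy; apply: h5.
rewrite mem_iota; lia.
Qed.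

Lemma PhiI l i j : 0 < i -> i < j -> l i = (l i.-1).+1 -> l j = l i.-1 ->
  (forall y, i <= y < j -> l i.-1 < l y) -> Phi l i j.
Proof.
move=> h1 h2 h3 h4 h5; apply/and5P; split=> //; try exact/eqP.
apply/allP=> y; rewrite mem_iota=> hy; apply: h5; lia.
Qed.

Section PathL.
Variable l : nat -> nat.

Lemma Phi_uniq_r i j j' : Phi l i j -> Phi l i j' -> j = j'.
Proof.
move=> /PhiP [h1 h2 h3 h4 h5] /PhiP [_ h2' _ h4' h5'].
case: (ltngtP j j') => // hj.
- have := h5' j; lia.
- have := h5 j'; lia.
Qed.

Lemma Phi_uniq_l i i' j : Phi l i j -> Phi l i' j -> i = i'.
Proof.
move=> /PhiP [h1 h2 h3 h4 h5] /PhiP [h1' h2' h3' h4' h5'].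
case: (ltngtP i i') => // hi.
- have := h5 i'.-1; lia.
- have := h5' i.-1; lia.
Qed.

Lemma Phi_share i j i' : Phi l i j -> Phi l i' i -> False.
Proof.
move=> /PhiP [h1 h2 h3 h4 h5] /PhiP [h1' h2' h3' h4' h5'].
have := h5' i.-1; lia.
Qed.

Lemma Phi_nest i j a b : Phi l i j -> Phi l a b -> i < a < j -> b < j.
Proof.
move=> Hp Hq ha; case: (ltngtP b j) => // hb.
- move: Hp Hq => /PhiP [h1 h2 h3 h4 h5] /PhiP [h1' h2' h3' h4' h5'].
  have := h5' j; have := h5 a.-1; lia.
- subst b; have := Phi_uniq_l Hp Hq; lia.
Qed.

Lemma children_disjoint a b a' b' : Phi l a b -> Phi l a' b' -> l a.-1 = l a'.-1 -> a < a' -> b < a'.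
Proof.
move=> Hp Hq he ha; case: (ltngtP b a') => // hb.
- move: Hp Hq => /PhiP [h1 h2 h3 h4 h5] /PhiP [h1' h2' h3' h4' h5'].
  have := h5 a'.-1; lia.
- subst a'; case: (Phi_share Hq Hp).
Qed.

Hypothesis Hs : forall y, stepok (l y) (l y.+1).

Lemma Phi_odd i j : Phi l i j -> odd (j - i).
Proof.
move=> /PhiP [h1 h2 h3 h4 h5].
have key : forall k, i + k <= j -> odd (l (i + k) + (i + k)) = odd (l i + i).
  elim=> [|k IH] hk; first by rewrite addn0.
  rewrite -IH; last lia.
  have := Hs (i + k); have := h5 (i + k); rewrite /stepok addnS; lia.
have := key (j - i); rewrite subnKC; last lia.
move=> /(_ (leqnn _)); lia.
Qed.

Hypothesis H0 : l 0 = 0.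
Variable N : nat.
Hypothesis HN : l N = 0.

Lemma ret_exists i : 0 < i <= N -> l i = (l i.-1).+1 -> exists j, i < j <= N /\ Phi l i j.
Proof.
move=> hi hl.
have hiN : i < N.
  case: (ltngtP i N) => //; [lia | move=> e; subst i; lia].
have ex : exists y, (i < y) && (l y <= l i.-1) by exists N; lia.
case: (ex_minnP ex) => j /andP [hj1 hj2] hmin.
have hjN : j <= N by apply: hmin; lia.
have inner : forall y, i <= y < j -> l i.-1 < l y.
  move=> y hy; case: (ltngtP y i) => [|hy'|hy']; first lia.
  - case: (leqP (l y) (l i.-1)) => // hle.
    have := hmin y; rewrite hy' hle => /(_ isT); lia.
  - subst y; lia.
exists j; split; first lia.
apply: PhiI => //; try lia.
have := inner j.-1; have := Hs j.-1; rewrite prednK; last lia.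
rewrite /stepok; lia.
Qed.

Lemma match_exists j : 0 < j <= N -> l j.-1 = (l j).+1 -> exists i, 0 < i < j /\ Phi l i j.
Proof.
move=> hj hl.
have ex : exists y, (y < j) && (l y <= l j) by exists 0; rewrite H0; lia.
have bnd : forall y, (y < j) && (l y <= l j) -> y <= j by move=> y; lia.
case: (ex_maxnP ex bnd) => y0 /andP [hy1 hy2] hmax.
have hy0 : y0 < j.-1.
  case: (ltngtP y0 j.-1) => //; first lia. move=> e; subst y0; lia.
have inner : forall z, y0 < z < j -> l j < l z.
  move=> z hz; case: (leqP (l z) (l j)) => // hle.
  have := hmax z; rewrite hle; lia.
have st := Hs y0; rewrite /stepok in st.
exists y0.+1; split; first lia.
apply: PhiI => //=; try (move: (inner y0.+1); lia).
move=> y hy; have := inner y; lia.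
Qed.

Lemma cover_exists i j z : j <= N -> Phi l i j -> i < z < j ->
  exists a b, [/\ Phi l a b, i < a, b < j, a <= z <= b & l a.-1 = l i].
Proof.
move=> hjN Hp hz; have := Hp => /PhiP [h1 h2 h3 h4 h5].
have ex : exists y, (i <= y) && (y < z) && (l y <= l i) by exists i; lia.
have bnd : forall y, (i <= y) && (y < z) && (l y <= l i) -> y <= z by move=> y; lia.
case: (ex_maxnP ex bnd) => y0 /andP [/andP [hy1 hy2] hy3] hmax.
have ey0 : l y0 = l i by have := h5 y0; lia.
have st := Hs y0.
have ea : l y0.+1 = (l y0).+1 by have := h5 y0.+1; rewrite /stepok in st; lia.
have [b [hb1 hb2]] := ret_exists (i := y0.+1) ltac:(lia) ea.
exists y0.+1, b; split => //; try lia.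
- have := Phi_nest Hp hb2; lia.
- case: (leqP z b) => hzb; first lia.
  have := hb2 => /PhiP [_ _ _ e5 _].
  have := hmax b; rewrite /= in e5; lia.
Qed.

End PathL.

Section Dinv.
Variable m : nat -> bool.
Definition Ne x := \sum_(0 <= y < x.+1) (m y && ~~ odd y).
Definition No x := \sum_(0 <= y < x.+1) (m y && odd y).
Hypothesis m0 : m 0 = false.

Lemma D_inv x : if odd (x + lev m x) then Ne x = No x + uphalf (lev m x)
                else No x = Ne x + uphalf (lev m x).
Proof.
elim: x => [|x IH]; first by rewrite /Ne /No !big_nat1 m0.
rewrite /Ne /No (big_nat_recr x.+1) // (big_nat_recr x.+1) // -/(Ne x) -/(No x).
move: IH; rewrite [lev m x.+1]/= /levstep.
case: (lev m x) => [|L] /=; case: (m x.+1) => /=;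
  rewrite ?oddD /= ?addn0 ?negbK; case hx: (odd x) => /=; try lia;
  case hL: (odd L) => /=; rewrite ?oddD ?hx ?hL /=; lia.
Qed.
End Dinv.

Lemma lev_end m N : m 0 = false -> Ne m N = No m N -> m N = false -> 0 < N ->
  lev m N = 0 /\ lev m N.-1 = 0.
Proof.
move=> m0 he mN hN; have hD := D_inv m0 N; rewrite he in hD.
have h0 : lev m N = 0 by move: hD; case: ifP => _; lia.
split=> //; clear hD; move: hN he mN h0; case: N => [//|n] _ _ mN /=.
rewrite mN /levstep; case: (lev m n) => [|L] //=; case hL: (odd L) => /=; lia.
Qed.

Lemma levstep_inj L b b' : levstep L b = levstep L b' -> b = b'.
Proof. by rewrite /levstep; case: b; case: b'; case: (L == 0); case: (odd L) => //=; lia. Qed.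

Lemma lev_inj m m' N : (forall x, x <= N -> lev m x = lev m' x) ->
  forall x, 0 < x <= N -> m x = m' x.
Proof.
move=> h [|x] // hx; have := h x.+1 ltac:(lia) => /=; rewrite (h x); last lia.
exact: levstep_inj.
Qed.

Section BSec.
Variable N : nat.
Variable B : {set {set pt N}}.

Definition arp (p : pt N * pt N) : bool := (p.1 < p.2) && ([set p.1; p.2] \in B).
Definition lvl (x : nat) : nat := #|[set p | arp p && (p.1 <= x < p.2)]|.
Definition cntc (x : nat) : nat := #|[set p | arp p && (p.1 <= x <= p.2)]|.
Definition opn (x : nat) : bool := [exists p, arp p && (p.1 == x :> nat)].
Definition cls (x : nat) : bool := [exists p, arp p && (p.2 == x :> nat)].

Lemma set2_lt (a b c d : pt N) : a < b -> c < d -> [set a; b] = [set c; d] -> a = c /\ b = d.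
Proof.
move=> hab hcd E.
have /set2P ha : a \in [set c; d] by rewrite -E set21.
have /set2P hb : b \in [set c; d] by rewrite -E set22.
have /set2P hc : c \in [set a; b] by rewrite E set21.
have {ha} ha : (a : nat) = c \/ (a : nat) = d by case: ha => ->; auto.
have {hb} hb : (b : nat) = c \/ (b : nat) = d by case: hb => ->; auto.
have {hc} hc : (c : nat) = a \/ (c : nat) = b by case: hc => ->; auto.
have e1 : (a : nat) = c by lia.
have e2 : (b : nat) = d by lia.
by split; apply: val_inj.
Qed.

Hypothesis H1 : forall P, P \in B -> exists p : pt N * pt N,
  [/\ p.1 < p.2, P = [set p.1; p.2], 0 < p.1 & odd (p.2 - p.1)].
Hypothesis H2 : forall p q, arp p -> arp q ->
  [|| p.1 == q.1 :> nat, p.1 == q.2 :> nat, p.2 == q.1 :> nat | p.2 == q.2 :> nat] -> p = q.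

Lemma arp_pos p : arp p -> 0 < p.1 /\ odd (p.2 - p.1).
Proof.
case/andP=> hlt hin; have [q [q1 q2 q3 q4]] := H1 hin.
by have [-> ->] := set2_lt hlt q1 q2.
Qed.

Lemma arp_pos2 (a b : pt N) : arp (a, b) -> 0 < a /\ a < b.
Proof. by move=> h; have [h1 _] := arp_pos h; case/andP: h. Qed.

Lemma lvl0 : lvl 0 = 0.
Proof.
apply/eqP; rewrite cards_eq0; apply/eqP/setP=> -[a b]; rewrite !inE /=.
case hp: (arp (a, b)) => //=; have := arp_pos2 hp; lia.
Qed.

Lemma open_step x : opn x -> lvl x = (lvl x.-1).+1.
Proof.
case/existsP=> -[a0 b0] /andP [h0 /eqP /= e0].
have [hx1 hx2] := arp_pos2 h0.
rewrite /lvl; suff -> : [set p | arp p && (p.1 <= x < p.2)] =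
   (a0, b0) |: [set p | arp p && (p.1 <= x.-1 < p.2)].
  by rewrite cardsU1 !inE /= h0 /=; lia.
apply/setP=> -[a b]; rewrite !inE /=.
case: (eqVneq (a, b) (a0, b0)) => [[-> ->]|ne] /=; first by rewrite h0 /=; lia.
case hp: (arp (a, b)) => //=; have [hy1 hy2] := arp_pos2 hp.
have n1 : (a : nat) != x.
  apply/eqP=> e; case/eqP: ne; apply: H2 => //=; rewrite e0 e eqxx //.
have n2 : (b : nat) != x.
  apply/eqP=> e; case/eqP: ne; apply: H2 => //=; rewrite e0 e eqxx ?orbT //.
apply/idP/idP; lia.
Qed.

Lemma close_step x : cls x -> lvl x.-1 = (lvl x).+1.
Proof.
case/existsP=> -[a0 b0] /andP [h0 /eqP /= e0].
have [hx1 hx2] := arp_pos2 h0.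
rewrite /lvl; suff -> : [set p | arp p && (p.1 <= x.-1 < p.2)] =
   (a0, b0) |: [set p | arp p && (p.1 <= x < p.2)].
  by rewrite cardsU1 !inE /= h0 /=; lia.
apply/setP=> -[a b]; rewrite !inE /=.
case: (eqVneq (a, b) (a0, b0)) => [[-> ->]|ne] /=; first by rewrite h0 /=; lia.
case hp: (arp (a, b)) => //=; have [hy1 hy2] := arp_pos2 hp.
have n1 : (a : nat) != x.
  apply/eqP=> e; case/eqP: ne; apply: H2 => //=; rewrite e0 e eqxx ?orbT //.
have n2 : (b : nat) != x.
  apply/eqP=> e; case/eqP: ne; apply: H2 => //=; rewrite e0 e eqxx ?orbT //.
apply/idP/idP; lia.
Qed.

Lemma none_step x : ~~ opn x -> ~~ cls x -> lvl x = lvl x.-1.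
Proof.
move=> no nc; rewrite /lvl; apply: eq_card => -[a b]; rewrite !inE /=.
case hp: (arp (a, b)) => //=; have [hy1 hy2] := arp_pos2 hp.
have n1 : (a : nat) != x.
  apply/eqP=> e; case/negP: no; apply/existsP; exists (a, b); rewrite hp /= e eqxx //.
have n2 : (b : nat) != x.
  apply/eqP=> e; case/negP: nc; apply/existsP; exists (a, b); rewrite hp /= e eqxx //.
apply/idP/idP; lia.
Qed.

Lemma opn_ncls x : opn x -> ~~ cls x.
Proof.
case/existsP=> -[a0 b0] /andP [h0 /eqP /= e0]; apply/negP.
case/existsP=> -[a b] /andP [hp /eqP /= e].
have [] : (a, b) = (a0, b0) by apply: H2 => //=; rewrite e e0 eqxx ?orbT.
move=> ea eb; subst a b; have := arp_pos2 hp; lia.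
Qed.

Lemma cnt_open x : opn x -> cntc x = lvl x.
Proof.
move=> ho; have nc := opn_ncls ho.
rewrite /lvl /cntc; apply: eq_card => -[a b]; rewrite !inE /=.
case hp: (arp (a, b)) => //=.
have n2 : (b : nat) != x.
  apply/eqP=> e; case/negP: nc; apply/existsP; exists (a, b); rewrite hp /= e eqxx //.
apply/idP/idP; lia.
Qed.

Lemma cnt_close x : cls x -> cntc x = lvl x.-1.
Proof.
move=> hc; have no : ~~ opn x by apply/negP=> /opn_ncls; rewrite hc.
have hx : 0 < x.
  case/existsP: hc => -[a b] /andP [hp /eqP /= e]; have := arp_pos2 hp; lia.
rewrite /lvl /cntc; apply: eq_card => -[a b]; rewrite !inE /=.
case hp: (arp (a, b)) => //=.
have n1 : (a : nat) != x.
  apply/eqP=> e; case/negP: no; apply/existsP; exists (a, b); rewrite hp /= e eqxx //.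
apply/idP/idP; lia.
Qed.

Hypothesis H3 : forall p (y : nat), arp p -> p.1 < y < p.2 -> opn y || cls y.

Lemma cnt_none x : 0 < x -> ~~ opn x -> ~~ cls x -> cntc x = 0 /\ lvl x.-1 = 0.
Proof.
move=> hx no nc; split; apply/eqP; rewrite cards_eq0; apply/eqP/setP=> -[a b]; rewrite !inE /=;
  case hp: (arp (a, b)) => //=;
  (have n1 : (a : nat) != x by
    apply/eqP=> e; case/negP: no; apply/existsP; exists (a, b); rewrite hp /= e eqxx //);
  (have n2 : (b : nat) != x by
    apply/eqP=> e; case/negP: nc; apply/existsP; exists (a, b); rewrite hp /= e eqxx //);
  apply/negP=> hh; have := @H3 (a, b) x hp; rewrite /= (negbTE no) (negbTE nc); lia.
Qed.

End BSec.

Definition mX N (X : {set pt N}) (y : nat) : bool := (y <= N) && (@inord N y \in X).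

Lemma mX_val N (X : {set pt N}) (y : pt N) : mX X y = (y \in X).
Proof. by rewrite /mX -ltnS ltn_ord inord_val. Qed.

Lemma ls_up L : levstep L (odd L.+1) = L.+1.
Proof. rewrite /levstep; case: L => [|L] //=; case: (odd L) => //=. Qed.
Lemma ls_down L : 0 < L -> levstep L (odd L) = L.-1.
Proof. rewrite /levstep; case: L => [|L] //= _; case: (odd L) => //=. Qed.

Section Eps.
Variable N : nat.
Variable B : {set {set pt N}}.

Lemma eps_mem x : (x \in eps B) = odd #|[set P in B | x \in wiv P]|.
Proof.
have hm : {morph (fun A : {set pt N} => x \in A) : A C / symd A C >-> addb A C}.
  by move=> A C; rewrite /symd !inE; case: (x \in A); case: (x \in C).
rewrite /eps (big_morph _ hm (in_set0 x)).
have ho : {morph odd : a b / a + b >-> addb a b} by move=> a b; rewrite oddD.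
rewrite -sum1dep_card big_mkcondr /= (big_morph _ ho (erefl (odd 0))).
by apply: eq_bigr => P _; case: (x \in wiv P).
Qed.

Lemma wiv_iv (i j : pt N) : i < j -> odd (j - i) -> wiv [set i; j] = iv N i j.
Proof.
move=> hij hod; apply/setP=> x; rewrite !inE; apply/existsP/idP.
- case=> a /existsP [b /andP [/andP [/eqP E hw] hx]].
  case/orP: hw => /andP [hab hw].
  + by have [ea eb] := set2_lt hij hab E; subst a b; move: hx; lia.
  + have E' : [set i; j] = [set b; a] by rewrite E; apply/setP => z; rewrite !inE orbC.
    have [ea eb] := set2_lt hij hab E'; subst a b.
    by move: hw; rewrite hod.
- move=> hx; exists i; apply/existsP; exists j.
  by rewrite /writing eqxx hij hod /= hx.
Qed.

Hypothesis H1 : forall P, P \in B -> exists p : pt N * pt N,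
  [/\ p.1 < p.2, P = [set p.1; p.2], 0 < p.1 & odd (p.2 - p.1)].

Lemma cntc_eq (x : pt N) : #|[set P in B | x \in wiv P]| = cntc B x.
Proof.
have -> : [set P in B | x \in wiv P] =
   (fun p : pt N * pt N => [set p.1; p.2]) @: [set p | arp B p && (p.1 <= x <= p.2)].
  apply/setP=> P; rewrite inE; apply/andP/imsetP.
  - case=> hP hx; have [[a b] [h1 h2 h3 h4]] := H1 hP; rewrite /= in h1 h2 h3 h4.
    exists (a, b) => //; rewrite inE /arp /= -h2 hP h1 /=.
    by move: hx; rewrite h2 wiv_iv // inE.
  - case=> -[a b]; rewrite inE /= => /andP [hp hx] ->; split; first by case/andP: hp.
    have [_ hod] := arp_pos H1 hp; case/andP: hp => hab _.
    by rewrite wiv_iv // inE.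
rewrite card_in_imset //.
move=> [a b] [c d]; rewrite !inE /= => /andP [/andP [h1 _] _] /andP [/andP [h2 _] _] E.
by case: (set2_lt h1 h2 E) => /= -> ->.
Qed.

Lemma eps_cnt (x : pt N) : (x \in eps B) = odd (cntc B x).
Proof. by rewrite eps_mem cntc_eq. Qed.

Hypothesis H2 : forall p q, arp B p -> arp B q ->
  [|| p.1 == q.1 :> nat, p.1 == q.2 :> nat, p.2 == q.1 :> nat | p.2 == q.2 :> nat] -> p = q.
Hypothesis H3 : forall p (y : nat), arp B p -> p.1 < y < p.2 -> opn B y || cls B y.

Lemma lvl_lev x : x <= N -> lvl B x = lev (mX (eps B)) x.
Proof.
elim: x => [|x IH] hx; first by rewrite lvl0.
rewrite /= -IH; last lia.
have -> : mX (eps B) x.+1 = odd (cntc B x.+1).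
  by rewrite /mX hx /= eps_cnt inordK.
case ho: (opn B x.+1).
  by rewrite (cnt_open H1 H2 ho) (open_step H1 H2 ho) /= ls_up.
case hc: (cls B x.+1).
  by rewrite (cnt_close H1 H2 hc) (close_step H1 H2 hc) /= ls_down.
have [h1 h2] := cnt_none H3 (ltn0Sn x) (negbT ho) (negbT hc).
by rewrite h1 (none_step H1 (negbT ho) (negbT hc)) /= h2.
Qed.

End Eps.

Lemma Phi_ext N (l l' : nat -> nat) i j : (forall x, x <= N -> l x = l' x) -> j <= N ->
  Phi l i j = Phi l' i j.
Proof.
move=> h hj; rewrite /Phi.
case hij: (i < j); last by rewrite !andbF.
rewrite !h //; try lia.
congr [&& _, _, _, _ & _]; apply: eq_in_all => y; rewrite mem_iota => hy.
by rewrite !h //; lia.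
Qed.

Section Char.
Variable N : nat.
Variable B : {set {set pt N}}.
Hypothesis H1 : forall P, P \in B -> exists p : pt N * pt N,
  [/\ p.1 < p.2, P = [set p.1; p.2], 0 < p.1 & odd (p.2 - p.1)].
Hypothesis H2 : forall p q, arp B p -> arp B q ->
  [|| p.1 == q.1 :> nat, p.1 == q.2 :> nat, p.2 == q.1 :> nat | p.2 == q.2 :> nat] -> p = q.
Hypothesis H4 : forall p q, arp B p -> arp B q -> p.1 < q.1 < p.2 -> q.2 < p.2.

Lemma outer_above (i j a b : pt N) : arp B (i, j) -> arp B (a, b) ->
  a <= i.-1 < b -> j < b.
Proof.
move=> hp hq hab.
have [p1 p2] := arp_pos2 H1 hp; have [q1 q2] := arp_pos2 H1 hq.
have n1 : (b : nat) != i.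
  apply/eqP=> e; have [] : (a, b) = (i, j) by apply: H2 => //=; rewrite e eqxx ?orbT.
  move=> ea _; subst a; lia.
have n2 : (b : nat) != j.
  apply/eqP=> e; have [] : (a, b) = (i, j) by apply: H2 => //=; rewrite e eqxx ?orbT.
  move=> ea _; subst a; lia.
have := H4 hq hp; rewrite /=; lia.
Qed.

Lemma arp_Phi (p : pt N * pt N) : arp B p -> Phi (lvl B) p.1 p.2.
Proof.
case: p => i j hp /=; have [p1 p2] := arp_pos2 H1 hp.
apply: PhiI => //.
- apply: (open_step H1 H2); apply/existsP; exists (i, j); rewrite hp eqxx //.
- rewrite /lvl; apply: eq_card => -[a b]; rewrite !inE /=.
  case: (eqVneq (a, b) (i, j)) => [[-> ->]|ne]; first by rewrite hp /=; lia.
  case hq: (arp B (a, b)) => //=; have [q1 q2] := arp_pos2 H1 hq.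
  have n1 : (a : nat) != i.
    apply/eqP=> e; case/eqP: ne; apply: H2 => //=; rewrite e eqxx //.
  have n2 : (a : nat) != j.
    apply/eqP=> e; case/eqP: ne; apply: H2 => //=; rewrite e eqxx ?orbT //.
  have := H4 hp hq; have := outer_above hp hq; rewrite /=.
  move=> o1 o2; apply/idP/idP; lia.
- move=> y hy; rewrite /lvl.
  apply: (@leq_trans #|(i, j) |: [set p | arp B p && (p.1 <= i.-1 < p.2)]|).
    rewrite cardsU1 !inE /= hp /=; lia.
  apply: subset_leq_card; apply/subsetP=> -[a b]; rewrite !inE /=.
  case/orP=> [/eqP [-> ->]|/andP [hq hb]]; first by rewrite hp /=; lia.
  have := outer_above hp hq hb; rewrite hq /=; lia.
Qed.

Lemma Phi_arp (p : pt N * pt N) : Phi (lvl B) p.1 p.2 -> arp B p.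
Proof.
case: p => i j /= hP; have := hP => /PhiP [h1 h2 h3 h4 h5].
case ho: (opn B i).
  case/existsP: ho => -[a0 b0] /andP [ha /eqP /= e0].
  have hP0 := arp_Phi ha; rewrite /= e0 in hP0.
  have e1 := Phi_uniq_r hP hP0.
  have -> : i = a0 by apply: val_inj; rewrite /= e0.
  by have -> : j = b0 by apply: val_inj.
case hc: (cls B i).
  have := close_step H1 H2 hc; lia.
have := none_step H1 (negbT ho) (negbT hc); lia.
Qed.

Lemma arpE (p : pt N * pt N) : arp B p = Phi (lvl B) p.1 p.2.
Proof. by apply/idP/idP; [apply: arp_Phi | apply: Phi_arp]. Qed.

End Char.

Section Gen.
Variable N : nat.
Implicit Types B : {set {set pt N}}.

Lemma maxmin_set2 (i j a b : pt N) : a < b -> i != j -> [set i; j] = [set a; b] ->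
  maxn i j - minn i j = b - a.
Proof.
move=> hab hij E; case: (ltngtP i j) => h.
- by have [-> ->] := set2_lt h hab E; lia.
- have E' : [set j; i] = [set a; b] by rewrite -E; apply/setP => z; rewrite !inE orbC.
  by have [-> ->] := set2_lt h hab E'; lia.
- by case/eqP: hij; apply: val_inj.
Qed.

Lemma H1_B0 B : (forall P, P \in B -> exists p : pt N * pt N,
  [/\ p.1 < p.2, P = [set p.1; p.2], 0 < p.1 & odd (p.2 - p.1)]) -> B0 B = set0.
Proof.
move=> H1; apply/setP=> P; rewrite !inE; apply/negP=> /andP [hP /existsP [i /existsP [j]]].
case/and3P=> /eqP E hij hod.
have [[a b] [h1 h2 h3 h4]] := H1 _ hP; rewrite /= in h1 h2 h3 h4.
move: hod; rewrite (maxmin_set2 h1 hij) -?E //; by rewrite h4.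
Qed.

Lemma H1_B1 B P : (forall P, P \in B -> exists p : pt N * pt N,
  [/\ p.1 < p.2, P = [set p.1; p.2], 0 < p.1 & odd (p.2 - p.1)]) -> P \in B -> P \in B1 B.
Proof.
move=> H1 hP; have [[a b] [h1 h2 h3 h4]] := H1 _ hP; rewrite /= in h1 h2 h3 h4.
rewrite inE hP /=; apply/existsP; exists a; apply/existsP; exists b.
rewrite h2 eqxx /=; apply/andP; split; first by rewrite neq_ltn h1.
by have -> : maxn a b - minn a b = b - a by lia.
Qed.

Lemma supp_mem B (z : pt N) : (forall P, P \in B -> exists p : pt N * pt N,
  [/\ p.1 < p.2, P = [set p.1; p.2], 0 < p.1 & odd (p.2 - p.1)]) ->
  (z \in supp B) = opn B z || cls B z.
Proof.
move=> H1; apply/bigcupP/orP.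
- case=> P hP hz; have [[a b] [h1 h2 h3 h4]] := H1 _ hP; rewrite /= in h1 h2 h3 h4.
  have ha : arp B (a, b) by rewrite /arp /= h1 -h2 hP.
  move: hz; rewrite h2 => /set2P [] ->; [left|right]; apply/existsP; exists (a, b);
    rewrite ha eqxx //.
- case=> /existsP [[a b] /andP [/andP [h1 h2] /eqP /= e]]; exists [set a; b] => //.
  + have -> : z = a by apply: val_inj.
    by rewrite set21.
  + have -> : z = b by apply: val_inj.
    by rewrite set22.
Qed.

End Gen.

Section FromX.
Variable N : nat.
Variable B : {set {set pt N}}.
Hypothesis hX : X0plus B.

Lemma X_PN : PN B.
Proof. by case: hX => [[[]]]. Qed.

Lemma X_cov : forall X (i j : pt N), X \in B1 B -> writing X i j -> zero_cov B (iv N i.+1 j.-1).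
Proof. by case: hX => [[[_ []]]]. Qed.

Lemma X_B0 : B0 B = set0.
Proof. by case: hX => _ h; apply/eqP; rewrite -cards_eq0 h. Qed.

Lemma X_noN : (@ord_max N) \notin supp B.
Proof. by case: hX => [[_ []]]. Qed.

Lemma X_H1 : forall P, P \in B -> exists p : pt N * pt N,
  [/\ p.1 < p.2, P = [set p.1; p.2], 0 < p.1 & odd (p.2 - p.1)].
Proof.
move=> P hP; have [hs _] := X_PN; have [hsz hin] := hs P hP.
move/eqP: hsz => /cards2P [x [y [hxy E]]].
have nb0 : P \notin B0 B by rewrite X_B0 inE.
have key : forall a b : pt N, a < b -> P = [set a; b] -> exists p : pt N * pt N,
  [/\ p.1 < p.2, P = [set p.1; p.2], 0 < p.1 & odd (p.2 - p.1)].
  move=> a b hab Eab; exists (a, b); split => //=.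
  - case: (posnP a) => // ha0; move: hin; rewrite /inS Eab.
    have -> : a = ord0 by apply: val_inj.
    by rewrite set21.
  - case hodd: (odd (b - a)) => //; case/negP: nb0; rewrite inE hP /=.
    apply/existsP; exists a; apply/existsP; exists b; rewrite Eab eqxx /=.
    apply/andP; split; first by rewrite neq_ltn hab.
    lia.
case: (ltngtP x y) => h.
- exact: key h E.
- apply: key h _; rewrite E; apply/setP=> z; rewrite !inE orbC //.
- by case/eqP: hxy; apply: val_inj.
Qed.

Lemma X_H2 : forall p q, arp B p -> arp B q ->
  [|| p.1 == q.1 :> nat, p.1 == q.2 :> nat, p.2 == q.1 :> nat | p.2 == q.2 :> nat] -> p = q.
Proof.
move=> [a b] [c d] /andP [/= h1 hA] /andP [/= h2 hC] hsh.
case: (eqVneq [set a; b] [set c; d]) => [E|ne].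
  by case: (set2_lt h1 h2 E) => -> ->.
have [z [hz1 hz2]] : exists z, z \in [set a; b] /\ z \in [set c; d].
  case/or4P: hsh => /eqP /= e.
  - have ea : a = c by apply: val_inj.
    by subst a; exists c; rewrite !set21.
  - have ea : a = d by apply: val_inj.
    by subst a; exists d; rewrite set21 set22.
  - have eb : b = c by apply: val_inj.
    by subst b; exists c; rewrite set22 set21.
  - have eb : b = d by apply: val_inj.
    by subst b; exists d; rewrite !set22.
have [_ hd] := X_PN.
move: (hd _ _ hA hC ne); rewrite -setI_eq0 => /eqP /setP /(_ z).
by rewrite inE hz1 hz2 inE.
Qed.

Lemma arcN (a b : pt N) : arp B (a, b) -> b < N.
Proof.
move=> hp; have := ltn_ord b; rewrite ltnS leq_eqVlt => /orP [/eqP e|] //.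
have : (@ord_max N) \in supp B.
  rewrite (supp_mem _ X_H1); apply/orP; right; apply/existsP; exists (a, b).
  by rewrite hp /= e.
by rewrite (negbTE X_noN).
Qed.

Lemma cover_pick (i j : pt N) (y : nat) : arp B (i, j) -> i < y < j ->
  exists a b : pt N, [/\ arp B (a, b), i < a, b < j & a <= y <= b].
Proof.
move=> hp hy; have [_ hod] := arp_pos X_H1 hp; have hij := hp; case/andP: hij => /= hij hin.
have hB1 : [set i; j] \in B1 B by apply: H1_B1 X_H1 hin.
have hw : writing [set i; j] i j by rewrite /writing eqxx hij hod.
have [s [hs1 [_ hY]]] := X_cov hB1 hw.
have hjN := ltn_ord j.
have hy' : (@inord N y) \in iv N i.+1 j.-1 by rewrite inE inordK; lia.
rewrite hY bigcup_seq in hy'; case/bigcupP: hy' => -[c d] hqs; rewrite inE inordK /=; last lia.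
move=> hyq; have [/= hcd hcdB] := hs1 _ hqs.
have hc : c \in iv N i.+1 j.-1.
  by rewrite hY bigcup_seq; apply/bigcupP; exists (c, d) => //; rewrite inE /=; lia.
have hd : d \in iv N i.+1 j.-1.
  by rewrite hY bigcup_seq; apply/bigcupP; exists (c, d) => //; rewrite inE /=; lia.
rewrite inE in hc; rewrite inE in hd.
exists c, d; split => //; try lia.
by rewrite /arp /= hcd; case/setIdP: hcdB.
Qed.

Lemma X_H3 : forall p (y : nat), arp B p -> p.1 < y < p.2 -> opn B y || cls B y.
Proof.
suff : forall n (i j : pt N), j - i <= n -> arp B (i, j) -> forall y, i < y < j -> opn B y || cls B y.
  by move=> h [i j] y hp hy; exact: h (j - i) i j (leqnn _) hp y hy.
elim=> [|n IH] i j hn hp y hy; first lia.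
have [a [b [hab ha hb hy2]]] := cover_pick hp hy.
case: (eqVneq (a : nat) y) => [e|n1].
  by apply/orP; left; apply/existsP; exists (a, b); rewrite hab /= e.
case: (eqVneq (b : nat) y) => [e|n2].
  by apply/orP; right; apply/existsP; exists (a, b); rewrite hab /= e.
apply: (IH a b) => //; lia.
Qed.

Lemma X_H4 : forall p q, arp B p -> arp B q -> p.1 < q.1 < p.2 -> q.2 < p.2.
Proof.
suff : forall n (i j : pt N), j - i <= n -> arp B (i, j) ->
   forall a b : pt N, arp B (a, b) -> i < a < j -> b < j.
  by move=> h [i j] [a b] hp hq hy; exact: h (j - i) i j (leqnn _) hp a b hq hy.
elim=> [|n IH] i j hn hp a b hq hy; first lia.
have [c [d [hcd hc hd hy2]]] := cover_pick hp hy.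
case: (eqVneq (c : nat) a) => [e|n1].
  have [_ e2] : (c, d) = (a, b) by apply: X_H2 => //=; rewrite e eqxx.
  by rewrite -e2.
case: (eqVneq (d : nat) a) => [e|n2].
  have [e1 e2] : (c, d) = (a, b) by apply: X_H2 => //=; rewrite e eqxx ?orbT.
  have := arp_pos2 X_H1 hcd; rewrite e1 -e; lia.
have := IH c d ltac:(lia) hcd a b hq ltac:(lia); lia.
Qed.

End FromX.

Lemma sum_card N (X : {set pt N}) (P : nat -> bool) :
  \sum_(0 <= y < N.+1) (mX X y && P y) = #|[set y in X | P y]|.
Proof.
rewrite big_mkord -sum1dep_card [RHS]big_mkcond /=.
by apply: eq_bigr => y _; rewrite mX_val; case: (_ && _).
Qed.

Lemma card_split N (X : {set pt N}) :
  #|X| = #|[set y in X | ~~ odd y]| + #|[set y in X | odd y]|.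
Proof.
have -> : #|X| = \sum_(0 <= y < N.+1) (mX X y && true).
  by rewrite sum_card; apply: eq_card => y; rewrite !inE andbT.
rewrite -(sum_card X (fun y => ~~ odd y)) -(sum_card X odd) -big_split /=; apply: eq_bigr => y _.
by case: (mX _ _); case: (odd y).
Qed.

Lemma inord0 N : @inord N 0 = ord0.
Proof. by apply: val_inj; rewrite /= inordK. Qed.

Lemma E_of_lev N (X : {set pt N}) : inS X -> lev (mX X) N = 0 ->
  gamma X = 0%R /\ ~~ odd #|X|.
Proof.
move=> hin hl.
have m0 : mX X 0 = false by rewrite /mX inord0 (negbTE hin) andbF.
have := D_inv m0 N; rewrite hl /= => he.
have he' : Ne (mX X) N = No (mX X) N by case: ifP he; lia.
move: he'; rewrite /Ne /No !sum_card => he'.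
split.
- by rewrite /gamma he' GRing.subrr.
- by rewrite card_split he' addnn odd_double.
Qed.

Section ToE.
Variable N : nat.
Variable B : {set {set pt N}}.
Hypothesis hX : X0plus B.

Lemma cntc0 : cntc B 0 = 0.
Proof.
apply/eqP; rewrite cards_eq0; apply/eqP/setP=> -[a b]; rewrite !inE /=.
case hp: (arp B (a, b)) => //=; have := arp_pos2 (X_H1 hX) hp; lia.
Qed.

Lemma cntcN : cntc B N = 0.
Proof.
apply/eqP; rewrite cards_eq0; apply/eqP/setP=> -[a b]; rewrite !inE /=.
case hp: (arp B (a, b)) => //=; have := arcN hX hp; lia.
Qed.

Lemma lvlN : lvl B N = 0.
Proof.
apply/eqP; rewrite cards_eq0; apply/eqP/setP=> -[a b]; rewrite !inE /=.
case hp: (arp B (a, b)) => //=; have := ltn_ord b; lia.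
Qed.

Lemma lvl_lev_X x : x <= N -> lvl B x = lev (mX (eps B)) x.
Proof. exact: (lvl_lev (X_H1 hX) (X_H2 hX) (X_H3 hX)). Qed.

Lemma fwd : E0plus (eps B).
Proof.
have hin : inS (eps B).
  by rewrite /inS (eps_cnt (X_H1 hX)) /= cntc0.
have [hg hc] := E_of_lev hin (esym (etrans (esym lvlN) (lvl_lev_X (leqnn N)))).
split; first by split.
split=> //.
by rewrite (eps_cnt (X_H1 hX)) /= cntcN.
Qed.

Lemma Nm1 : 1 < N -> (@inord N N.-1 \in supp B) = (@inord N N.-1 \in eps B).
Proof.
move=> hN.
have ev : nat_of_ord (@inord N N.-1) = N.-1 by rewrite inordK; lia.
rewrite (supp_mem _ (X_H1 hX)) (eps_cnt (X_H1 hX)) ev.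
have no : ~~ opn B N.-1.
  apply/negP=> /existsP [[a b] /andP [hp /eqP /= e]].
  have := arcN hX hp; have := arp_pos2 (X_H1 hX) hp; lia.
rewrite (negbTE no) /=.
have l0 : lvl B N.-1 = 0.
  apply/eqP; rewrite cards_eq0; apply/eqP/setP=> -[a b]; rewrite !inE /=.
  case hp: (arp B (a, b)) => //=; have := arcN hX hp; lia.
case hc: (cls B N.-1).
  by rewrite (cnt_close (X_H1 hX) (X_H2 hX) hc) (close_step (X_H1 hX) (X_H2 hX) hc) l0.
have [-> _] := cnt_none (X_H3 hX) (x := N.-1) ltac:(lia) no (negbT hc).
done.
Qed.

End ToE.

Lemma inj_X N (B B' : {set {set pt N}}) : X0plus B -> X0plus B' -> eps B = eps B' -> B = B'.
Proof.
move=> hX hX' he.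
have hl : forall x, x <= N -> lvl B x = lvl B' x.
  by move=> x hx; rewrite (lvl_lev_X hX hx) (lvl_lev_X hX' hx) he.
have ha : forall p : pt N * pt N, arp B p = arp B' p.
  move=> p; rewrite (arpE (X_H1 hX) (X_H2 hX) (X_H4 hX)) (arpE (X_H1 hX') (X_H2 hX') (X_H4 hX')).
  apply: Phi_ext hl _; rewrite -ltnS; exact: ltn_ord.
have sub : forall (C C' : {set {set pt N}}), X0plus C -> (forall p, arp C p = arp C' p) ->
    forall P, P \in C -> P \in C'.
  move=> C C' hC hCC P hP; have [[a b] [h1 h2 _ _]] := X_H1 hC hP; rewrite /= in h1 h2.
  have : arp C (a, b) by rewrite /arp /= h1 -h2.
  by rewrite hCC => /andP [_]; rewrite /= -h2.
apply/setP=> P; apply/idP/idP; first exact: sub hX ha P.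
by apply: sub hX' _ P => p; rewrite ha.
Qed.

Lemma pairwise_of_uniq (T : eqType) (r : rel T) (s : seq T) : uniq s ->
  (forall x y, x \in s -> y \in s -> x != y -> r x y) -> pairwise r s.
Proof.
elim: s => [|x s IH] //= /andP [hx hu] h; apply/andP; split.
- apply/allP=> y hy; apply: h; rewrite ?inE ?eqxx ?hy ?orbT //.
  by apply/eqP=> e; move: hx; rewrite e hy.
- apply: IH => // a b ha hb; apply: h; rewrite inE ?ha ?hb ?orbT //.
Qed.

Lemma zero_cov_of_set N (B : {set {set pt N}}) (S : {set pt N * pt N}) (Y : {set pt N}) :
  (forall p, p \in S -> p.1 < p.2 /\ [set p.1; p.2] \in B1 B) ->
  (forall p q, p \in S -> q \in S -> p != q -> [disjoint iv N p.1 p.2 & iv N q.1 q.2]) ->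
  (forall y : pt N, y \in Y <-> exists2 p, p \in S & y \in iv N p.1 p.2) ->
  zero_cov B Y.
Proof.
move=> h1 h2 h3; exists (enum S). split.
 move=> p; rewrite mem_enum. move=> hp. have := h1 p hp. done.
split.
- apply: pairwise_of_uniq; first exact: enum_uniq.
  move=> p q; rewrite !mem_enum. move=> hp hq ne. have := h2 p q hp hq ne. done.
- apply/setP=> y; rewrite bigcup_seq; apply/idP/bigcupP.
  + move/h3=> [p hp hy]; exists p => //. by rewrite mem_enum.
  + move=> [p hp hy]; apply/h3; exists p => //. by rewrite -mem_enum.
Qed.


Section Constr.
Variable N : nat.
Variable X : {set pt N}.
Hypothesis hE : E0plus X.
Hypothesis hN : 0 < N.

Local Notation l := (lev (mX X)).

Lemma lS : forall y, stepok (l y) (l y.+1).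
Proof. exact: lev_step. Qed.
Lemma l0 : l 0 = 0.
Proof. by []. Qed.

Lemma lN : l N = 0 /\ l N.-1 = 0.
Proof.
case: hE => [[hin hev] [hmax hg]].
apply: lev_end => //.
- by rewrite /mX inord0 (negbTE hin) andbF.
- rewrite /Ne /No !sum_card; move: hg; rewrite /gamma; lia.
- rewrite /mX leqnn /=; apply/negP => h; move: hmax; rewrite -[X in X \notin _](@inord_val N).
  by rewrite /= h.
Qed.

Definition Bc : {set {set pt N}} :=
  [set [set p.1; p.2] | p in [set p : pt N * pt N | Phi l p.1 p.2]].

Lemma arpBc (p : pt N * pt N) : arp Bc p = Phi l p.1 p.2.
Proof.
apply/andP/idP.
- case=> hlt /imsetP [q]; rewrite inE => hq E.
  case: p q hlt hq E => [a b] [c d] /= hab hcd E.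
  have hcd' : c < d by case/PhiP: hcd.
  by case: (set2_lt hab hcd' E) => -> ->.
- move=> hP; split; first by case/PhiP: hP.
  by apply/imsetP; exists p; rewrite ?inE.
Qed.

Lemma Bc_H1 : forall P, P \in Bc -> exists p : pt N * pt N,
  [/\ p.1 < p.2, P = [set p.1; p.2], 0 < p.1 & odd (p.2 - p.1)].
Proof.
move=> P /imsetP [[a b]]; rewrite inE /= => hp ->; exists (a, b); case/PhiP: (hp) => h1 h2 _ _ _.
split => //=; exact: (@Phi_odd (lev (mX X)) lS a b hp).
Qed.

Lemma Bc_H2 : forall p q, arp Bc p -> arp Bc q ->
  [|| p.1 == q.1 :> nat, p.1 == q.2 :> nat, p.2 == q.1 :> nat | p.2 == q.2 :> nat] -> p = q.
Proof.
move=> [a b] [c d]; rewrite !arpBc /= => hp hq.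
case/or4P=> /eqP e.
- rewrite e in hp; have e2 := Phi_uniq_r hp hq.
  by congr pair; apply: val_inj.
- by rewrite e in hp; case: (Phi_share hp hq).
- by rewrite -e in hq; case: (Phi_share hq hp).
- rewrite e in hp; have e2 := Phi_uniq_l hp hq.
  by congr pair; apply: val_inj.
Qed.

Lemma opn_Bc (x : nat) (j : nat) : x <= N -> j <= N -> Phi l x j -> opn Bc x.
Proof.
move=> hx hj hP; apply/existsP; exists (inord x, inord j).
by rewrite arpBc /= !inordK ?hP ?eqxx //; lia.
Qed.

Lemma cls_Bc (i : nat) (x : nat) : i <= N -> x <= N -> Phi l i x -> cls Bc x.
Proof.
move=> hi hx hP; apply/existsP; exists (inord i, inord x).
by rewrite arpBc /= !inordK ?hP ?eqxx //; lia.
Qed.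

Lemma Bc_H3 : forall p (y : nat), arp Bc p -> p.1 < y < p.2 -> opn Bc y || cls Bc y.
Proof.
move=> [a b] y; rewrite arpBc /= => hp hy.
have hb := ltn_ord b.
case/PhiP: (hp) => h1 h2 h3 h4 h5.
have hpos := h5 y.-1; have st := lS y.-1; rewrite prednK in st; last lia.
rewrite /stepok in st.
case/orP: st => [/orP [] /eqP e|].
- have [j [hj1 hj2]] := ret_exists lS l0 (proj1 lN) (i := y) ltac:(lia) ltac:(lia).
  by rewrite (opn_Bc (j := j)) //; lia.
- have hyN : 0 < y <= N by lia.
  have [i [hi1 hi2]] := match_exists lS l0 (proj1 lN) hyN e.
  by rewrite (cls_Bc (i := i)) ?orbT //; lia.
- move=> hh; have := hpos; lia.
Qed.

Lemma Bc_H4 : forall p q, arp Bc p -> arp Bc q -> p.1 < q.1 < p.2 -> q.2 < p.2.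
Proof. move=> p q; rewrite !arpBc => hp hq; exact: Phi_nest hp hq. Qed.

Lemma Bc_noN : (@ord_max N) \notin supp Bc.
Proof.
rewrite (supp_mem _ Bc_H1); apply/negP => /orP [] /existsP [[a b]];
  rewrite arpBc /= => /andP [hP /eqP e].
- have := ltn_ord b; case/PhiP: hP; lia.
- case/PhiP: hP => h1 h2 h3 h4 h5; have := h5 N.-1; have := proj2 lN; lia.
Qed.

Lemma Bc_cov (i j : pt N) : Phi l i j -> zero_cov Bc (iv N i.+1 j.-1).
Proof.
move=> hP; have hjN := ltn_ord j.
apply: (zero_cov_of_set (S := [set q : pt N * pt N | Phi l q.1 q.2 && (i < q.1 < j) && (l q.1.-1 == l i)])).
- move=> [a b]; rewrite inE /= => /andP [/andP [hq _] _].
  split; first by case/PhiP: hq.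
  by apply: H1_B1 Bc_H1 _; apply/imsetP; exists (a, b); rewrite ?inE.
- move=> [a b] [c d]; rewrite !inE /= => /andP [/andP [hq1 hr1] /eqP e1] /andP [/andP [hq2 hr2] /eqP e2] ne.
  rewrite -setI_eq0; apply/eqP/setP=> z; rewrite !inE; apply/negP => /andP [hz1 hz2].
  case: (ltngtP a c) => hac.
  + have := children_disjoint hq1 hq2 ltac:(lia) hac; lia.
  + have := children_disjoint hq2 hq1 ltac:(lia) hac; lia.
  + rewrite hac in hq1; have e := Phi_uniq_r hq1 hq2.
    by case/eqP: ne; congr pair; apply: val_inj.
- move=> y; rewrite inE; split.
  + move=> hy; have [a [b [hab ha hb hz hl]]] := cover_exists lS l0 (proj1 lN) (z := y) hjN hP ltac:(lia).
    have hbN : b <= N by lia.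
    have ea : (@inord N a : nat) = a by rewrite inordK; lia.
    have eb : (@inord N b : nat) = b by rewrite inordK; lia.
    exists (inord a, inord b); rewrite inE /= ea eb; last lia.
    by rewrite hab hl eqxx andbT /=; lia.
  + case=> -[a b]; rewrite !inE /= => /andP [/andP [hq hr] _] hy.
    have := Phi_nest hP hq hr; lia.
Qed.

Lemma Bc_X0plus : X0plus Bc.
Proof.
have hB0 : B0 Bc = set0 := H1_B0 Bc_H1.
split; last by rewrite hB0 cards0.
split; last by split; [exact: Bc_noN | left; rewrite hB0 cards0].
split; [split | split].
- move=> P hP; have [[a b] [/= h1 h2 h3 _]] := Bc_H1 hP; subst P.
  split; first by rewrite cards2; case: eqVneq => // e; move: h1; rewrite e ltnn.
  by rewrite /inS; apply/negP => /set2P [] e; move: h3 h1; rewrite -e /=; lia.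
- move=> P Q hP hQ ne.
  have [[a b] [/= h1 h2 _ _]] := Bc_H1 hP; have [[c d] [/= h1' h2' _ _]] := Bc_H1 hQ.
  have ha : arp Bc (a, b) by rewrite /arp /= h1 -h2.
  have hc : arp Bc (c, d) by rewrite /arp /= h1' -h2'.
  rewrite -setI_eq0; apply/eqP/setP=> z; rewrite !inE; apply/negP => /andP [hz1 hz2].
  have sh : [|| (a, b).1 == (c, d).1 :> nat, (a, b).1 == (c, d).2 :> nat,
      (a, b).2 == (c, d).1 :> nat | (a, b).2 == (c, d).2 :> nat].
    by move: hz1 hz2; rewrite h2 h2' /= => /set2P [] <- /set2P [] ->; rewrite eqxx ?orbT.
  have e := Bc_H2 ha hc sh; case: e => ea eb; subst c d.
  by move: ne; rewrite h2 h2' eqxx.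
- move=> Y i j; rewrite inE => /andP [hY _] /andP [/eqP EY hw].
  case/imsetP: hY => -[a b]; rewrite inE /= => hab EY'.
  have [_ hlt _ _ _] := PhiP hab.
  case/orP: hw => /andP [hij hod].
  + have [ea eb] := set2_lt hij hlt (etrans (esym EY) EY'); subst a b.
    exact: Bc_cov.
  + have E' : [set j; i] = [set a; b].
      by rewrite -EY' EY; apply/setP => z; rewrite !inE orbC.
    have [ea eb] := set2_lt hij hlt E'; subst a b.
    by move: hod; rewrite (@Phi_odd (lev (mX X)) lS _ _ hab).
- exists [::]; rewrite /istar_seq hB0 cards0 /=.
  split; first done.
  split; first by move=> k hk; exfalso; lia.
  split; first by move=> Y; rewrite inE; split=> // -[k [hk _]]; exfalso; lia.
  split; first by move=> k hk; exfalso; lia.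
  split; first by move=> k hk; exfalso; lia.
  by move=> k hk hk'; exfalso; lia.
Qed.

Lemma lvl_Bc x : x <= N -> lvl Bc x = l x.
Proof.
elim: x => [|x IH] hx; first exact: lvl0 Bc_H1.
have IH' := IH ltac:(lia).
have st := lS x; rewrite /stepok in st.
case/orP: st => [/orP [] /eqP e|].
- have [j [hj1 hj2]] := ret_exists lS l0 (proj1 lN) (i := x.+1) ltac:(lia) e.
  have ho : opn Bc x.+1 by apply: (opn_Bc (j := j)) => //; lia.
  by rewrite (open_step Bc_H1 Bc_H2 ho) succnK IH' e.
- have hyN : 0 < x.+1 <= N by lia.
  have [i [hi1 hi2]] := match_exists lS l0 (proj1 lN) hyN e.
  have hc : cls Bc x.+1 by apply: (cls_Bc (i := i)) => //; lia.
  have := close_step Bc_H1 Bc_H2 hc; rewrite succnK IH' e; lia.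
- case/andP => /eqP e1 /eqP e2.
  have no : ~~ opn Bc x.+1.
    apply/negP => /existsP [[a b] /andP [hp /eqP /= ea]].
    move: hp; rewrite arpBc /= ea => /PhiP [_ _ h3 _ _]; move: h3; rewrite succnK e2; lia.
  have nc : ~~ cls Bc x.+1.
    apply/negP => /existsP [[a b] /andP [hp /eqP /= eb]].
    move: hp; rewrite arpBc /= eb => /PhiP [h1 h2 _ _ h5]; have := h5 x; rewrite e1; lia.
  by rewrite (none_step Bc_H1 no nc) succnK IH' e1 e2.
Qed.

Lemma eps_Bc : eps Bc = X.
Proof.
have hX0 := Bc_X0plus.
have hl : forall x, x <= N -> lev (mX (eps Bc)) x = lev (mX X) x.
  by move=> x hx; rewrite -(lvl_lev_X hX0 hx) lvl_Bc.
apply/setP=> z; case: (posnP z) => hz.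
- have -> : z = ord0 by apply: val_inj.
  have [[h1 _] _] := fwd hX0; have [[h2 _] _] := hE.
  by rewrite (negbTE h1) (negbTE h2).
- rewrite -!mX_val; apply: lev_inj hl _ _.
  by rewrite hz /= -ltnS ltn_ord.
Qed.

End Constr.

Unset Implicit Arguments.

Theorem mainTheorem7 (N : nat) (hN3 : (3 <= N)%N) (hNodd : odd N) :
  bij_betw (@X0plus' N) (@E0plus' N) (@eps N) /\
  bij_betw (@X0plus'' N) (@E0plus'' N) (@eps N).
Proof.
have hN1 : (1 < N)%N by lia.
have hN0 : (0 < N)%N by lia.
split; split; [|split| |split].
- move=> B [hB hs]; split; first exact: fwd hB.
  by rewrite -(Nm1 hB hN1).
- by move=> B B' [hB _] [hB' _]; apply: inj_X.
- move=> X [hE hs]; exists (Bc X); have hX0 := Bc_X0plus hE hN0.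
  split; last exact: eps_Bc hE hN0.
  by split=> //; rewrite (Nm1 hX0 hN1) (eps_Bc hE hN0).
- move=> B [hB hs]; split; first exact: fwd hB.
  by rewrite -(Nm1 hB hN1).
- by move=> B B' [hB _] [hB' _]; apply: inj_X.
- move=> X [hE hs]; exists (Bc X); have hX0 := Bc_X0plus hE hN0.
  split; last exact: eps_Bc hE hN0.
  by split=> //; rewrite (Nm1 hX0 hN1) (eps_Bc hE hN0).
Qed.
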